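(* Let $p$ be prime and $H\le\mathrm{S}_n$ be in $\mathfrak{InP}(\mathrm{C}_p)$, with $B$, $\gamma$, $M$ and the standard generators as in the context. Let $b\in N_B(H)$ and let $x,y$ be standard generators of $H$ whose supports are not disjoint. Then there exists $a\in\mathbb{F}_p^*$ such that $x^b=x^a$ and $y^b=y^a$.
   Context: $H\le\mathrm{S}_{n}$, $n=pk$, has orbits $\Omega_1,\dots,\Omega_k$ of size $p$ with each $G_i:=H|_{\Omega_i}$ cyclic of order $p$; $|H|=p^s$ and the orbits are ordered so that $|H|_{\Omega_1\cup\dots\cup\Omega_s}|=p^s$. $G=G_1\times\dots\times G_k$, $g_i$ generates $G_i$ (chosen as conjugates of $g_1$ via bijections witnessing permutation isomorphisms $G_1\to G_i$), and $\gamma:G\to\mathbb{F}_p^k$ is $\gamma(g_1^{r_1}\cdots g_k^{r_k})=(r_1,\dots,r_k)$, with $\mathbb{F}_p$ identified with $\{0,\dots,p-1\}$. $B=\langle N_{\mathrm{Sym}(\Omega_i)}(G_i)\rangle$. $M\in\mathrm{M}(s,k,p)$ is the generator matrix of $\gamma(H)$ in standard form (its first $s$ columns form the identity $I_s$), and the standard generators of $H$ are $x_i=\gamma^{-1}(M_{i,*})$, $1\le i\le s$, where $M_{i,*}$ is the $i$-th row. The support of a permutation is its set of moved points. *)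

(* Defs.v *)
From HB Require Import structures.
From mathcomp Require Import all_boot all_order all_algebra all_fingroup all_solvable.
Set Implicit Arguments. Unset Strict Implicit. Unset Printing Implicit Defensive.

(* Permutations of {0,...,n-1}: S_n = {perm 'I_n}; mathcomp conventions:
   x ^ b = b^-1 * x * b (conjugation), composition left to right. *)

Definition psupp (n : nat) (x : {perm 'I_n}) : {set 'I_n} := [set t | x t != t].

(* the restriction H|_S of H to a set S (S invariant under H),
   realised as permutations of 'I_n fixing every point outside S *)
Definition restrG (n : nat) (S : {set 'I_n}) (H : {set {perm 'I_n}})
  : {set {perm 'I_n}} := (restr_perm S @* H)%g.

(* gamma^{-1} : F_p^k -> G,  (r_1,...,r_k) |-> g_1^{r_1} ... g_k^{r_k},
   with F_p identified with {0,...,p-1} *)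
Definition gamma_inv (n k p : nat) (g : 'I_k -> {perm 'I_n}) (v : 'rV['F_p]_k)
  : {perm 'I_n} := (\prod_(j < k) g j ^+ (nat_of_ord (v ord0 j)))%g.

Definition std_gen (n k p s : nat) (g : 'I_k -> {perm 'I_n})
  (M : 'M['F_p]_(s, k)) (i : 'I_s) : {perm 'I_n} := gamma_inv g (row i M).

Definition Bgroup (n k : nat) (Om : 'I_k -> {set 'I_n}) (H : {set {perm 'I_n}})
  : {set {perm 'I_n}} :=
  << \bigcup_(i < k) 'N_(perm.Sym (Om i))(restrG (Om i) H) >>%g.

(* Main.v *)
Require Import Defs.
From HB Require Import structures.
From mathcomp Require Import all_boot all_order all_algebra all_fingroup all_solvable.


Set Implicit Arguments. Unset Strict Implicit. Unset Printing Implicit Defensive.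
Import GRing.Theory.
Local Open Scope ring_scope.

Lemma perm_on_commute n (A B : {set 'I_n}) (f h : {perm 'I_n}) :
  perm_on A f -> perm_on B h -> [disjoint A & B] -> commute f h.
Proof.
move=> fA hB dAB; apply/permP => t; rewrite !permM.
case: (boolP (t \in A)) => tA.
  have tB : t \notin B by rewrite (disjointFr dAB tA).
  have ftA : f t \in A by rewrite (perm_closed _ fA).
  have ftB : f t \notin B by rewrite (disjointFr dAB ftA).
  by rewrite (out_perm hB tB) (out_perm hB ftB).
rewrite (out_perm fA tA).
case: (boolP (t \in B)) => tB.
  have htB : h t \in B by rewrite (perm_closed _ hB).
  have htA : h t \notin A by rewrite disjoint_sym in dAB; rewrite (disjointFr dAB htB).
  by rewrite (out_perm fA htA).
by rewrite (out_perm hB tB) (out_perm fA tA).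
Qed.

Lemma prod_fix n I (r : seq I) (P : pred I) (F : I -> {perm 'I_n}) t :
  (forall i, P i -> F i t = t) -> (\prod_(i <- r | P i) F i)%g t = t.
Proof.
move=> H; elim/big_ind: _ => //; first by rewrite perm1.
by move=> f h ft ht; rewrite permM ft ht.
Qed.

Lemma prod_commute (G : finGroupType) I (r : seq I) (F : I -> G) y :
  (forall i, commute y (F i)) -> commute y (\prod_(i <- r) F i)%g.
Proof.
move=> H; elim/big_ind: _ => //; first exact: commute1.
by move=> a c; apply: commuteM.
Qed.

Lemma prod_expg (G : finGroupType) I (r : seq I) (F : I -> G) m :
  (forall i j, commute (F i) (F j)) ->
  ((\prod_(i <- r) F i) ^+ m = \prod_(i <- r) (F i ^+ m))%g.
Proof.
move=> H; elim: r => [|a r IH]; first by rewrite !big_nil expg1n.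
rewrite !big_cons expgMn ?IH //; exact: prod_commute.
Qed.

Lemma conj_prod (G : finGroupType) I (r : seq I) (F : I -> G) b :
  ((\prod_(i <- r) F i) ^ b = \prod_(i <- r) (F i ^ b))%g.
Proof.
elim: r => [|a r IH]; first by rewrite !big_nil conj1g.
by rewrite !big_cons conjMg IH.
Qed.

Theorem lemma4p8 (p k n s : nat) (H : {group {perm 'I_n}})
  (Om : 'I_k -> {set 'I_n}) (g : 'I_k -> {perm 'I_n}) (M : 'M['F_p]_(s, k))
  (b x y : {perm 'I_n}) :
  prime p ->
  n = (p * k)%N ->
  (* Omega_1, ..., Omega_k are the (pairwise distinct) orbits of H, each of size p *)
  injective Om ->
  (forall i, exists t, Om i = orbit 'P%act H t) ->
  (forall t, exists i, t \in Om i) ->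
  (forall i, #|Om i| = p) ->
  (* each G_i := H|_{Omega_i} is cyclic of order p *)
  (forall i, cyclic (restrG (Om i) H) /\ #|restrG (Om i) H| = p) ->
  (* |H| = p^s and |H|_{Omega_1 u ... u Omega_s}| = p^s *)
  #|H| = (p ^ s)%N ->
  #|restrG (\bigcup_(i < k | (i < s)%N) Om i) H| = (p ^ s)%N ->
  (* g_i generates G_i, the g_i being conjugates of one another via bijections
     witnessing permutation isomorphisms G_i -> G_j *)
  (forall i, <[g i]>%g = restrG (Om i) H) ->
  (forall i j, exists f : {perm 'I_n},
      [/\ [set f t | t in Om i] = Om j,
          (restrG (Om i) H :^ f)%g = restrG (Om j) H &
          g j = (g i ^ f)%g]) ->
  (* M is a generator matrix of gamma(H) in standard form *)
  row_free M ->
  (forall v : 'rV['F_p]_k, (v <= M)%MS = (gamma_inv g v \in H)) ->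
  (forall (i : 'I_s) (j : 'I_k), (j < s)%N -> M i j = ((i : nat) == j)%:R%R) ->
  (* b in N_B(H); x, y standard generators with non-disjoint supports *)
  b \in ('N_(Bgroup Om H)(H))%g ->
  (exists i, x = std_gen g M i) ->
  (exists j, y = std_gen g M j) ->
  ~~ [disjoint psupp x & psupp y] ->
  exists a : 'F_p, a != 0%R /\ (x ^ b = x ^+ (a : nat) /\ y ^ b = y ^+ (a : nat))%g.
Proof.
move=> pr np Ominj Oorb Ocov Ocard Gcyc cardH cardHs gen conjiso rf Mrow Mstd bN
  [i1 ->] [i2 ->] ndisj.
have p_gt1 : (1 < p)%N by exact: prime_gt1.
have HGj j : g j \in restrG (Om j) H by rewrite -gen cycle_id.
have ordg j : #[g j]%g = p by rewrite /order gen; exact: (Gcyc j).2.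
have Gon j h : h \in restrG (Om j) H -> perm_on (Om j) h.
  by case/morphimP => z _ _ ->; exact: restr_perm_on.
have gon j : perm_on (Om j) (g j) by exact: Gon.
have disj i j : i != j -> [disjoint Om i & Om j].
  move=> nij; apply/pred0P => u /=; apply/negbTE/negP => /andP[ui uj].
  case: (Oorb i) => ti Ei; case: (Oorb j) => tj Ej.
  rewrite Ei in ui; rewrite Ej in uj.
  have E1 : orbit 'P%act H u = orbit 'P%act H ti by apply/orbit_eqP.
  have E2 : orbit 'P%act H u = orbit 'P%act H tj by apply/orbit_eqP.
  have Eij : Om i = Om j by rewrite Ei Ej -E1 -E2.
  by move: nij; rewrite (Ominj _ _ Eij) eqxx.
have gcomm i j : commute (g i) (g j).
  case: (eqVneq i j) => [-> //|nij]; exact: perm_on_commute (gon i) (gon j) (disj _ _ nij).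
move: bN; rewrite inE => /andP[bB bNH].
have bG j : b \in 'N(restrG (Om j) H)%g.
  apply: (subsetP _ _ bB); rewrite gen_subG; apply/bigcupsP => i _.
  apply/subsetP => c; rewrite inE => /andP[cS cN].
  case: (eqVneq i j) => [<- //|nij].
  apply: (subsetP (cent_sub _)); apply/centP => h hG.
  rewrite inE in cS.
  exact: perm_on_commute cS (Gon _ _ hG) (disj _ _ nij).
have exa j : {a : 'F_p | (g j ^ b == g j ^+ (a : nat))%g}.
  apply: sigW.
  have : (g j ^ b)%g \in <[g j]>%g by rewrite gen memJ_norm ?bG ?HGj.
  case/cycleP => m ->; exists (m%:R)%R; rewrite val_Fp_nat //; have := expg_mod_order (g j) m; rewrite ordg => ->; exact: eqxx.
have [a Ha] := all_sig exa.
have {}Ha j : (g j ^ b = g j ^+ (a j : nat))%g by apply/eqP; exact: Ha.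
have a_nz j : a j != 0.
  apply/negP => /eqP a0; have := Ha j; rewrite a0 /= expg0 => /eqP.
  rewrite conjg_eq1 => /eqP g1; have := ordg j; rewrite g1 order1 => p1.
  by rewrite -p1 in p_gt1.
have expF j (u v : 'F_p) : (g j ^+ ((u * v)%R : 'F_p) = g j ^+ ((u : nat) * (v : nat)))%g.
  have -> : u * v = ((u : nat) * (v : nat))%:R by rewrite natrM !natr_Zp.
  by rewrite val_Fp_nat //; have := expg_mod_order (g j) ((u : nat) * (v : nat)); rewrite ordg.
have conjF (v : 'rV['F_p]_k) : (gamma_inv g v ^ b = gamma_inv g (\row_j (a j * v ord0 j)%R))%g.
  rewrite /gamma_inv conj_prod; apply: eq_bigr => j _.
  by rewrite mxE expF conjXg Ha expgM.
have sk : (s <= k)%N by move: rf; rewrite /row_free => /eqP <-; exact: rank_leq_col.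
have key (i : 'I_s) : forall j, a j * M i j = a (widen_ord sk i) * M i j.
  have xH : gamma_inv g (row i M) \in H by rewrite -Mrow row_sub.
  have : (gamma_inv g (row i M) ^ b)%g \in H by rewrite memJ_norm.
  rewrite conjF -Mrow => /submxP[D ED].
  have Mw (m l : 'I_s) : M m (widen_ord sk l) = (m == l)%:R by exact: (Mstd m (widen_ord sk l) (ltn_ord l)).
  have hD l : D ord0 l = if l == i then a (widen_ord sk i) else 0.
    have := congr1 (fun A : 'rV_k => A ord0 (widen_ord sk l)) ED.
    rewrite /= !mxE Mw (bigD1 l) //= big1 => [|m nml]; last first.
      by rewrite Mw (negbTE nml) mulr0.
    rewrite Mw eqxx mulr1 addr0 => <-.
    case: (eqVneq l i) => [->|nli]; first by rewrite mulr1.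
    by rewrite mulr0.
  move=> j; have := congr1 (fun A : 'rV_k => A ord0 j) ED.
  rewrite /= !mxE => ->; rewrite (bigD1 i) //= big1 => [|m nmi]; last by rewrite hD (negbTE nmi) mul0r.
  by rewrite hD eqxx addr0.
have conjx (i : 'I_s) (c : 'F_p) : (forall j, a j * M i j = c * M i j) ->
    (std_gen g M i ^ b = std_gen g M i ^+ (c : nat))%g.
  move=> Hc; rewrite /std_gen conjF /gamma_inv prod_expg; last first.
    by move=> j l /=; apply: commuteX2; exact: gcomm.
  apply: eq_bigr => j _; rewrite !mxE Hc expF -expgM mulnC //.
have fixx (i : 'I_s) j t : t \in Om j -> M i j = 0 -> std_gen g M i t = t.
  move=> tj M0; rewrite /std_gen /gamma_inv prod_fix // => m _.
  rewrite permX; case: (eqVneq m j) => [->|nmj]; first by rewrite mxE M0.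
  apply: iter_fix; apply: (out_perm (gon m)).
  have jm : j != m by rewrite eq_sym.
  by rewrite (disjointFr (disj _ _ jm) tj).
have [t] : exists t, (t \in psupp (std_gen g M i1)) && (t \in psupp (std_gen g M i2)).
  case: (pickP [pred t | (t \in psupp (std_gen g M i1)) && (t \in psupp (std_gen g M i2))]) => [t Ht|none]; first by exists t.
  case/negP: ndisj; apply/pred0P => t /=; exact: none.
rewrite !inE => /andP[t1 t2].
case: (Ocov t) => j tj.
have Mnz (i : 'I_s) : std_gen g M i t != t -> M i j != 0.
  by move=> nt; apply/eqP => M0; move: nt; rewrite (fixx i j t tj M0) eqxx.
have e1 : a (widen_ord sk i1) = a j by apply: (mulIf (Mnz _ t1)); rewrite key.
have e2 : a (widen_ord sk i2) = a j by apply: (mulIf (Mnz _ t2)); rewrite key.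
exists (a j); split; first exact: a_nz.
split; apply: conjx => l; rewrite key ?e1 ?e2 //.
Qed.
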